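(* Let $\Lambda=(W_j,\Lambda_j,v_j)_{j\in\mathbb{J}}$ be a Parseval g-fusion frame for $H$, let $\mathbb{I}$ be a finite subset of $\mathbb{J}$, and define $S_{\mathbb{I}}f:=\sum_{j\in\mathbb{I}}v_j^2\pi_{W_j}\Lambda_j^*\Lambda_j\pi_{W_j}f$ for $f\in H$. Then $$0\le S_{\mathbb{I}}-S_{\mathbb{I}}^2\le\frac14\,id_H$$ in the order of self-adjoint operators.
   Context: $H$ is a separable Hilbert space, $\mathbb{J}\subseteq\mathbb{Z}$, $\{H_j\}_{j\in\mathbb{J}}$ are separable Hilbert spaces, $\Lambda_j\in\mathcal{B}(H,H_j)$, $W_j$ are closed subspaces of $H$, $v_j>0$, and $\pi_V$ denotes the orthogonal projection onto a closed subspace $V$. The triple $\Lambda=(W_j,\Lambda_j,v_j)$ is a Parseval g-fusion frame for $H$ if $\sum_{j\in\mathbb{J}}v_j^2\Vert\Lambda_j\pi_{W_j}f\Vert^2=\Vert f\Vert^2$ for all $f\in H$. For self-adjoint $T,U$, $T\le U$ means $\langle Tf,f\rangle\le\langle Uf,f\rangle$ for all $f$. *)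

(* Defs.v *)
From HB Require Import structures.
From mathcomp Require Import all_boot all_order all_algebra.
From mathcomp Require Import complex.
From mathcomp Require Import all_classical all_reals.
From mathcomp Require Import esum.
Set Implicit Arguments. Unset Strict Implicit. Unset Printing Implicit Defensive.
Import Order.TTheory GRing.Theory Num.Theory.
Local Open Scope ring_scope.
Local Open Scope classical_set_scope.

Section Hilbert.
Variable R : realType.
Local Notation C := (R[i]).

Definition is_inner_product (V : lmodType C) (ip : V -> V -> C) : Prop :=
  [/\ (forall x y z, ip (x + y) z = ip x z + ip y z),
      (forall (a : C) x y, ip (a *: x) y = a * ip x y),
      (forall x y, ip y x = Num.conj (ip x y)),
      (forall x, 0 <= ip x x) &
      (forall x, ip x x = 0 -> x = 0)].

Definition ipnorm (V : lmodType C) (ip : V -> V -> C) (x : V) : R :=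
  Num.sqrt (complex.Re (ip x x)).

Definition ip_cauchy (V : lmodType C) (ip : V -> V -> C) (u : nat -> V) :=
  forall eps : R, 0 < eps -> exists N : nat, forall m n : nat,
    (N <= m)%N -> (N <= n)%N -> ipnorm ip (u m - u n) < eps.

Definition ip_converges (V : lmodType C) (ip : V -> V -> C) (u : nat -> V) (l : V) :=
  forall eps : R, 0 < eps -> exists N : nat, forall n : nat,
    (N <= n)%N -> ipnorm ip (u n - l) < eps.

Definition ip_complete (V : lmodType C) (ip : V -> V -> C) :=
  forall u : nat -> V, ip_cauchy ip u -> exists l, ip_converges ip u l.

Definition ip_separable (V : lmodType C) (ip : V -> V -> C) :=
  exists d : nat -> V, forall (x : V) (eps : R), 0 < eps ->
    exists n : nat, ipnorm ip (x - d n) < eps.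

Definition separable_hilbert (V : lmodType C) (ip : V -> V -> C) : Prop :=
  [/\ is_inner_product ip, ip_complete ip & ip_separable ip].

Definition bounded_linear (V W : lmodType C) (ipV : V -> V -> C)
  (ipW : W -> W -> C) (T : V -> W) : Prop :=
  (forall (a : C) x y, T (a *: x + y) = a *: T x + T y) /\
  exists M : R, forall x, ipnorm ipW (T x) <= M * ipnorm ipV x.

Definition is_adjoint (V W : lmodType C) (ipV : V -> V -> C)
  (ipW : W -> W -> C) (T : V -> W) (Ts : W -> V) : Prop :=
  forall x y, ipW (T x) y = ipV x (Ts y).

Definition closed_subspace (V : lmodType C) (ip : V -> V -> C) (Wsp : set V) :=
  [/\ Wsp 0, (forall x y, Wsp x -> Wsp y -> Wsp (x + y)),
      (forall (a : C) x, Wsp x -> Wsp (a *: x)) &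
      (forall u l, (forall n, Wsp (u n)) -> ip_converges ip u l -> Wsp l)].

Definition is_orth_proj (V : lmodType C) (ip : V -> V -> C) (Wsp : set V)
  (P : V -> V) : Prop :=
  forall f, Wsp (P f) /\ (forall w, Wsp w -> ip (f - P f) w = 0).

Definition op_le (V : lmodType C) (ip : V -> V -> C) (T U : V -> V) : Prop :=
  forall f, ip (T f) f <= ip (U f) f.

End Hilbert.

(* Main.v *)
Require Import Defs.
From HB Require Import structures.
From mathcomp Require Import all_boot all_order all_algebra.
From mathcomp Require Import complex.
From mathcomp Require Import all_classical all_reals.
From mathcomp Require Import constructive_ereal esum.
From mathcomp Require Import ring lra.
Import Order.TTheory GRing.Theory Num.Theory.
Local Open Scope ring_scope.
Local Open Scope classical_set_scope.
Local Open Scope complex_scope.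

Section CS.
Local Set Implicit Arguments.
Variable R : realType.
Local Notation C := (R[i]).
Lemma ge0_realC {z : C} : 0 <= z -> z = (complex.Re z)%:C.
Proof. by case: z => a b; rewrite lecE /= => /andP[/eqP -> _]. Qed.
Lemma ge0_Re (z : C) : 0 <= z -> 0 <= complex.Re z.
Proof. by case: z => a b; rewrite lecE /= => /andP[_ ->]. Qed.
Lemma conj_realC (r : R) : Num.conj (r%:C) = r%:C.
Proof. by apply: conj_Creal; rewrite complex_real. Qed.

Context {V : lmodType C} {B : V -> V -> C}.
Hypothesis BD : forall x y z, B (x + y) z = B x z + B y z.
Hypothesis BZ : forall (a : C) x y, B (a *: x) y = a * B x y.
Hypothesis BC : forall x y, B y x = Num.conj (B x y).
Hypothesis Bge0 : forall x, 0 <= B x x.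

Lemma BDr x y z : B x (y + z) = B x y + B x z.
Proof. by rewrite (BC (y+z) x) (BC y x) (BC z x) BD rmorphD. Qed.
Lemma BZr (a : C) x y : B x (a *: y) = Num.conj a * B x y.
Proof. by rewrite (BC (a *: y) x) (BC y x) BZ rmorphM. Qed.

Lemma BQ al be x y : B (al *: x + be *: y) (al *: x + be *: y) =
  al * Num.conj al * B x x + al * Num.conj be * B x y
  + be * Num.conj al * Num.conj (B x y) + be * Num.conj be * B y y.
Proof.
rewrite BD !BZ !BDr !BZr -(BC x y); ring.
Qed.

Lemma cauchy_schwarz x y :
  B x y * Num.conj (B x y) <= B x x * B y y.
Proof.
set b := B x y.
have hA := ge0_realC (Bge0 x); set a := complex.Re (B x x) in hA.
have hC := ge0_realC (Bge0 y); set c := complex.Re (B y y) in hC.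
have hK := ge0_realC (mul_conjC_ge0 b); set k := complex.Re _ in hK.
have a0 : 0 <= a by rewrite -ler0c -hA; exact: Bge0.
have c0 : 0 <= c by rewrite -ler0c -hC; exact: Bge0.
have k0 : 0 <= k by rewrite -ler0c -hK; exact: mul_conjC_ge0.
have h1 : 0 <= c * (c * a - k).
  have := Bge0 (c%:C *: x + (- b) *: y).
  rewrite BQ -/b hA hC !rmorphN conj_realC.
  have -> : c%:C * c%:C * a%:C + c%:C * - Num.conj b * b + - b * c%:C * Num.conj b
    + - b * - Num.conj b * c%:C = (c * (c * a - k))%:C.
    by rewrite !rmorphM rmorphB /= !rmorphM /= -hK; ring.
  by rewrite ler0c.
have h2 : 0 <= a * (a * c - k).
  have := Bge0 ((- Num.conj b) *: x + a%:C *: y).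
  rewrite BQ -/b hA hC !rmorphN conj_realC /= conjCK.
  have -> : - Num.conj b * - b * a%:C + - Num.conj b * a%:C * b + a%:C * - b * Num.conj b
    + a%:C * a%:C * c%:C = (a * (a * c - k))%:C.
    by rewrite !rmorphM rmorphB /= !rmorphM /= -hK; ring.
  by rewrite ler0c.
have h3 : 0 <= a - 2 * k + k * c.
  have := Bge0 (1 *: x + (- b) *: y).
  rewrite BQ -/b hA hC !rmorphN rmorph1.
  have -> : 1 * 1 * a%:C + 1 * - Num.conj b * b + - b * 1 * Num.conj b
    + - b * - Num.conj b * c%:C = (a - 2 * k + k * c)%:C.
    by rewrite rmorphD rmorphB !rmorphM /= -hK; ring.
  by rewrite ler0c.
rewrite hK hA hC -rmorphM lecR.
have [c_gt0|] := ltrP 0 c; first nra.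
move=> cle0; have c_eq0 : c = 0 by apply/le_anti/andP.
rewrite c_eq0 in h1 h2 h3 *; nra.
Qed.
Lemma B0l y : B 0 y = 0.
Proof. by rewrite -(scale0r (0:V)) BZ mul0r. Qed.
Lemma BN x y : B (- x) y = - B x y.
Proof. by rewrite -scaleN1r BZ mulN1r. Qed.
Lemma BB x y z : B (x - y) z = B x z - B y z.
Proof. by rewrite BD BN. Qed.
Lemma Bsum (I : seq int) (F : int -> V) y :
  B (\sum_(j <- I) F j) y = \sum_(j <- I) B (F j) y.
Proof.
elim: I => [|j I IH]; first by rewrite !big_nil B0l.
by rewrite !big_cons BD IH.
Qed.
End CS.

Section IP.
Local Set Implicit Arguments.
Variable R : realType.
Variable V : lmodType R[i].
Variable ip : V -> V -> R[i].
Hypothesis hip : is_inner_product ip.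
Lemma ipD x y z : ip (x + y) z = ip x z + ip y z.
Proof. by move: hip; rewrite /is_inner_product => -[] *; auto. Qed.
Lemma ipZ (a : R[i]) x y : ip (a *: x) y = a * ip x y.
Proof. by move: hip; rewrite /is_inner_product => -[] *; auto. Qed.
Lemma ipC x y : ip y x = Num.conj (ip x y).
Proof. by move: hip; rewrite /is_inner_product => -[] *; auto. Qed.
Lemma ip_ge0 x : 0 <= ip x x.
Proof. by move: hip; rewrite /is_inner_product => -[] *; auto. Qed.
Lemma ip_eq0 x : ip x x = 0 -> x = 0.
Proof. by move: hip; rewrite /is_inner_product => -[] *; auto. Qed.
Lemma ipnorm2 x : ipnorm ip x ^+ 2 = complex.Re (ip x x).
Proof. by rewrite /ipnorm sqr_sqrtr // ge0_Re // ip_ge0. Qed.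
Lemma ipxx x : ip x x = (ipnorm ip x ^+ 2)%:C.
Proof. by rewrite ipnorm2 -ge0_realC // ip_ge0. Qed.
End IP.

Section Lin.
Context {R : realType}.
Lemma lin0 {U V : lmodType R[i]} {f : U -> V}
  (hf : forall a x y, f (a *: x + y) = a *: f x + f y) : f 0 = 0.
Proof.
have := hf 1 0 0; rewrite !scale1r addr0 => /(congr1 (fun z => z - f 0)).
by rewrite subrr addrK.
Qed.
Lemma linD {U V : lmodType R[i]} {f : U -> V}
  (hf : forall a x y, f (a *: x + y) = a *: f x + f y) x y : f (x + y) = f x + f y.
Proof. by rewrite -{1}(scale1r x) hf scale1r. Qed.
Lemma linZ {U V : lmodType R[i]} {f : U -> V}
  (hf : forall a x y, f (a *: x + y) = a *: f x + f y) a x : f (a *: x) = a *: f x.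
Proof. by rewrite -[a *: x]addr0 hf (lin0 hf) addr0. Qed.
End Lin.

Theorem corollary3p2 (R : realType)
  (H : lmodType R[i]) (ipH : H -> H -> R[i])
  (Hj : int -> lmodType R[i]) (ipj : forall j : int, Hj j -> Hj j -> R[i])
  (J : set int)
  (W : int -> set H) (P : int -> H -> H)
  (L : forall j : int, H -> Hj j) (Ls : forall j : int, Hj j -> H)
  (v : int -> R) :
  separable_hilbert ipH ->
  (forall j, J j -> separable_hilbert (ipj j)) ->
  (forall j, J j -> bounded_linear ipH (ipj j) (L j)) ->
  (forall j, J j -> is_adjoint ipH (ipj j) (L j) (Ls j)) ->
  (forall j, J j -> closed_subspace ipH (W j)) ->
  (forall j, J j -> is_orth_proj ipH (W j) (P j)) ->
  (forall j, J j -> 0 < v j) ->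
  (* Parseval g-fusion frame *)
  (forall f : H,
     (\esum_(j in J) ((v j) ^+ 2 * (ipnorm (ipj j) (L j (P j f))) ^+ 2)%:E)%E
     = ((ipnorm ipH f) ^+ 2)%:E) ->
  forall I : seq int, uniq I -> (forall j, j \in I -> J j) ->
  let S : H -> H := fun f =>
    \sum_(j <- I) ((v j) ^+ 2)%:C *: P j (Ls j (L j (P j f))) in
  op_le ipH (fun f => 0) (fun f => S f - S (S f)) /\
  op_le ipH (fun f => S f - S (S f)) (fun f => (1 / 4 : R[i]) *: f).
Proof.
move=> [hH _ _] hHj hL hLs hW hP hv hPar I uI IJ S.
have hj : forall j, J j -> is_inner_product (ipj j).
  by move=> j /hHj [].
have BH := (ipD hH, ipZ hH, ipC hH, ip_ge0 hH).
have Psa : forall j, J j -> forall x y, ipH (P j x) y = ipH x (P j y).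
  move=> j Jj x y.
  have [Wx ox] := hP j Jj x; have [Wy oy] := hP j Jj y.
  have e1 : ipH (P j x) y = ipH (P j x) (P j y).
    have -> : y = P j y + (y - P j y) by rewrite addrC subrK.
    rewrite (BDr (ipD hH) (ipC hH)) (ipC hH (y - P j y)) (oy _ Wx) rmorph0 addr0.
    by rewrite addrC subrK.
  have e2 : ipH x (P j y) = ipH (P j x) (P j y).
    have -> : x = P j x + (x - P j x) by rewrite addrC subrK.
    rewrite (ipD hH) (ox _ Wy) addr0.
    by rewrite addrC subrK.
  by rewrite e1 e2.
have hPw : forall j, J j -> forall z w, W j w -> ipH (P j z) w = ipH z w.
  move=> j Jj z w Ww; have [_ oz] := hP j Jj z.
  by apply/eqP; rewrite eq_sym -subr_eq0 -(BB (ipD hH) (ipZ hH)) oz.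
have Plin : forall j, J j -> forall (a : R[i]) x y, P j (a *: x + y) = a *: P j x + P j y.
  move=> j Jj a x y.
  have := hW j Jj; rewrite /closed_subspace => -[W0 WD WZ _].
  have WP : forall z, W j (P j z) by move=> z; have [] := hP j Jj z.
  set d := P j (a *: x + y) - (a *: P j x + P j y).
  have Wd : W j d.
    rewrite /d -scaleN1r; apply: (WD); first exact: WP.
    by apply: (WZ); apply: (WD); [apply: (WZ)|]; apply: WP.
  apply/eqP; rewrite -subr_eq0 -/d; apply/eqP/(ip_eq0 hH).
  rewrite {1}/d (BB (ipD hH) (ipZ hH)) (ipD hH) (ipZ hH) !hPw //.
  by rewrite (ipD hH) (ipZ hH) subrr.
have Llin : forall j, J j -> forall (a : R[i]) x y, L j (a *: x + y) = a *: L j x + L j y.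
  by move=> j Jj; move: (hL j Jj); rewrite /bounded_linear => -[].
have LPlin : forall j, J j -> forall (a : R[i]) x y,
    L j (P j (a *: x + y)) = a *: L j (P j x) + L j (P j y).
  by move=> j Jj a x y; rewrite Plin // Llin.
have Ladj : forall j, J j -> forall w u, ipH (Ls j w) u = ipj j w (L j u).
  move=> j Jj w u; have hA := hLs j Jj; rewrite /is_adjoint in hA.
  by rewrite (ipC hH u) (ipC (hj j Jj) (L j u) w) hA.
pose B := fun x y => \sum_(j <- I) ((v j)^+2)%:C * ipj j (L j (P j x)) (L j (P j y)).
have BD0 : forall x y z, B (x + y) z = B x z + B y z.
  move=> x y z; rewrite /B -big_split; apply: eq_big_seq => j jI /=.
  by rewrite (linD (LPlin j (IJ j jI))) (ipD (hj j (IJ j jI))) mulrDr.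
have BZ0 : forall (a : R[i]) x y, B (a *: x) y = a * B x y.
  move=> a x y; rewrite /B mulr_sumr; apply: eq_big_seq => j jI /=.
  by rewrite (linZ (LPlin j (IJ j jI))) (ipZ (hj j (IJ j jI))) mulrCA.
have BC0 : forall x y, B y x = Num.conj (B x y).
  move=> x y; rewrite /B rmorph_sum; apply: eq_big_seq => j jI /=.
  by rewrite (rmorphM Num.conj) /= conj_realC (ipC (hj j (IJ j jI)) (L j (P j x))).
have Bge00 : forall x, 0 <= B x x.
  move=> x; rewrite /B big_seq_cond; apply: sumr_ge0 => j /andP[jI _].
  apply: mulr_ge0; first by rewrite ler0c sqr_ge0.
  exact: (ip_ge0 (hj j (IJ j jI))).
have F1 : forall x y, ipH (S x) y = B x y.
  move=> x y; rewrite /S (Bsum (ipD hH) (ipZ hH)); apply: eq_big_seq => j jI /=.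
  rewrite (ipZ hH) (Psa j (IJ j jI)); congr (_ * _); exact: (Ladj j (IJ j jI)).
pose a := fun x => \sum_(j <- I) v j ^+ 2 * ipnorm (ipj j) (L j (P j x)) ^+ 2.
have F3 : forall x, B x x = (a x)%:C.
  move=> x; rewrite /B /a rmorph_sum; apply: eq_big_seq => j jI /=.
  by rewrite (ipxx (hj j (IJ j jI)) (L j (P j x))) -rmorphM.
have F4 : forall x, a x <= ipnorm ipH x ^+ 2.
  move=> x; rewrite -lee_fin -hPar; apply: esum_ge; exists [set` I].
    by split; [exact: finite_seq | move=> j /= jI; exact: IJ].
  rewrite ereal.fsumEFin ?finite_seq // /a.
  have -> : forall F : int -> R, \sum_(j <- I) F j = \sum_(j \in [set` I]) F j.
    by move=> F; rewrite [LHS]fsbig_seq.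
  exact: le_refl.
  exact: finite_seq.
have key : forall f, let s := ipnorm ipH (S f) ^+ 2 in let n := ipnorm ipH f ^+ 2 in
   [/\ ipH (S f) f = (a f)%:C, ipH (S (S f)) f = s%:C, ipH f f = n%:C,
       0 <= a f - s & a f - s <= 1 / 4 * n].
  move=> f s n.
  have aB : ipH (S f) f = (a f)%:C by rewrite F1 F3.
  have hs : ipH (S f) (S f) = s%:C by rewrite (ipxx hH).
  have hss : ipH (S (S f)) f = s%:C by rewrite F1 BC0 -F1 hs conj_realC.
  have hn : ipH f f = n%:C by rewrite (ipxx hH).
  have a0 : 0 <= a f by rewrite -ler0c -F3.
  have s0 : 0 <= s by rewrite exprn_ge0 // sqrtr_ge0.
  have n0 : 0 <= n by rewrite exprn_ge0 // sqrtr_ge0.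
  have hA' : a (S f) <= s := F4 (S f).
  have cs1 := cauchy_schwarz BD0 BZ0 BC0 Bge00 f (S f).
  rewrite -F1 hs conj_realC !F3 -!rmorphM lecR in cs1.
  have cs2 := cauchy_schwarz (ipD hH) (ipZ hH) (ipC hH) (ip_ge0 hH) (S f) f.
  rewrite aB conj_realC hn hs -!rmorphM lecR in cs2.
  split => //; first nra.
  have [n_gt0|] := ltrP 0 n; first by have := sqr_ge0 (n - 2 * a f); nra.
  move=> nle0; have n_eq0 : n = 0 by apply/le_anti/andP.
  rewrite n_eq0 in cs2 *; nra.
split => f; have [aB hss hn h1 h2] := key f.
  by rewrite /= (B0l (ipZ hH)) (BB (ipD hH) (ipZ hH)) aB hss -rmorphB ler0c.
rewrite /= (BB (ipD hH) (ipZ hH)) aB hss (ipZ hH) hn -rmorphB.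
have -> : (1 / 4 : R[i]) = (1 / 4 : R)%:C.
  by rewrite rmorphM rmorph1 fmorphV rmorph_nat.
by rewrite -rmorphM lecR.
Qed.
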